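(* Let $P^\ast$ be an $n\times k$ minimal matrix representation of a $0/1$-polytope with $k$ vertices, and let $w_k^\top=(2^{k-1},\dots,2^1,2^0)$. Then the entries of the vector $P^\ast w_k$ are non-increasing from top to bottom.
   Context: For $x\in\{0,1\}^n$ its column number is $v_n^\top x$ with $v_n^\top=(2^0,2^1,\dots,2^{n-1})$. For an $n\times m$ $0/1$-matrix $P$ with pairwise distinct columns, $\nu(P)$ is the vector of its column numbers sorted increasingly. $P$ is a minimal matrix representation if its column numbers $v_n^\top P$ are strictly increasing from left to right and $\nu(P)\preceq\nu(Q)$ in lexicographic order for every matrix $Q$ obtained from $P$ by complementing (exchanging $0\leftrightarrow1$) the entries of some subset of its rows and then permuting its rows. *)

(* Defs.v *)
From mathcomp Require Import all_boot all_algebra all_fingroup.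
Set Implicit Arguments. Unset Strict Implicit. Unset Printing Implicit Defensive.

Definition colnum (n k : nat) (P : 'M[bool]_(n, k)) (j : 'I_k) : nat :=
  \sum_(i < n) (P i j : nat) * 2 ^ i.

Definition nu (n k : nat) (P : 'M[bool]_(n, k)) : seq nat :=
  sort leq [seq colnum P j | j <- enum 'I_k].

Fixpoint lexle (s t : seq nat) : bool :=
  match s, t with
  | [::], _ => true
  | _ :: _, [::] => false
  | x :: s', y :: t' => (x < y) || ((x == y) && lexle s' t')
  end.

Definition flip_perm (n k : nat) (P : 'M[bool]_(n, k)) (c : 'I_n -> bool)
  (sigma : 'S_n) : 'M[bool]_(n, k) :=
  \matrix_(i < n, j < k) (P (sigma i) j (+) c (sigma i)).

Definition minimal_rep (n k : nat) (P : 'M[bool]_(n, k)) : Prop :=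
  injective (colnum P) /\
  (forall j j' : 'I_k, (j < j')%N -> (colnum P j < colnum P j')%N) /\
  (forall (c : 'I_n -> bool) (sigma : 'S_n), lexle (nu P) (nu (flip_perm P c sigma))).

(* (P w_k)_i = sum_j P_ij 2^(k-1-j) *)
Definition rownum (n k : nat) (P : 'M[bool]_(n, k)) (i : 'I_n) : nat :=
  \sum_(j < k) (P i j : nat) * 2 ^ (k - 1 - j).

(* Main.v *)
Require Import Defs.
From mathcomp Require Import all_boot all_algebra all_fingroup.
From mathcomp Require Import zify.
Set Implicit Arguments. Unset Strict Implicit. Unset Printing Implicit Defensive.

Definition W (k : nat) (a : 'I_k -> bool) : nat := \sum_(j < k) (a j : nat) * 2 ^ (k - 1 - j).

Lemma W_step k (a : 'I_k.+1 -> bool) :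
  W a = (a ord0 : nat) * 2 ^ k + W (fun j : 'I_k => a (lift ord0 j)).
Proof.
rewrite /W big_ord_recl /= subn0 subSS subn0; congr (_ + _).
apply: eq_bigr => j _; rewrite /bump /=; congr (_ * 2 ^ _); lia.
Qed.

Lemma W_lt k (a : 'I_k -> bool) : W a < 2 ^ k.
Proof.
elim: k a => [|k IH] a; first by rewrite /W big_ord0.
rewrite W_step expnS; have := IH (fun j => a (lift ord0 j)); case: (a ord0) => /=; lia.
Qed.

Lemma W_cmp k (a b : 'I_k -> bool) : W a < W b ->
  exists j0 : 'I_k, (forall j : 'I_k, j < j0 -> a j = b j) /\ a j0 = false /\ b j0 = true.
Proof.
elim: k a b => [|k IH] a b; first by rewrite /W !big_ord0.
rewrite !W_step.
have Ha := W_lt (fun j : 'I_k => a (lift ord0 j)).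
have Hb := W_lt (fun j : 'I_k => b (lift ord0 j)).
case Ea: (a ord0); case Eb: (b ord0) => /= H.
- have [j0 [H1 [H2 H3]]] : exists j0 : 'I_k, (forall j : 'I_k, j < j0 -> a (lift ord0 j) = b (lift ord0 j)) /\ a (lift ord0 j0) = false /\ b (lift ord0 j0) = true.
    by apply: IH; lia.
  exists (lift ord0 j0); split=> //.
  move=> j; case: (unliftP ord0 j) => [j' ->|->]; last by rewrite Ea Eb.
  rewrite !lift0 ltnS; exact: H1.
- lia.
- by exists ord0.
- have [j0 [H1 [H2 H3]]] : exists j0 : 'I_k, (forall j : 'I_k, j < j0 -> a (lift ord0 j) = b (lift ord0 j)) /\ a (lift ord0 j0) = false /\ b (lift ord0 j0) = true.
    by apply: IH; lia.
  exists (lift ord0 j0); split=> //.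
  move=> j; case: (unliftP ord0 j) => [j' ->|->]; last by rewrite Ea Eb.
  rewrite !lift0 ltnS; exact: H1.
Qed.

Lemma sortedA (s : seq nat) t y : sorted leq s -> t < size s ->
  t < count (fun v => v < y) s -> nth 0 s t < y.
Proof.
move=> Hs Ht Hc; rewrite ltnNge; apply/negP => Hy.
have : count (fun v => v < y) (drop t s) = 0.
  have Hall : all (predC (fun v => v < y)) (drop t s); last first.
    move: Hall; rewrite all_count => /eqP E.
    have := count_predC (fun v => v < y) (drop t s); rewrite E; lia.
  apply/(all_nthP 0) => i; rewrite size_drop nth_drop => Hi /=; rewrite -leqNgt.
  apply: leq_trans Hy _; apply: (sorted_leq_nth leq_trans leqnn) => //; rewrite ?inE /=; lia.
move=> Hd; move: Hc; rewrite -[in count _ s](cat_take_drop t s) count_cat Hd addn0 => Hc.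
have := count_size (fun v => v < y) (take t s); rewrite size_takel; lia.
Qed.

Lemma sortedB (s : seq nat) t y : sorted leq s -> t < size s ->
  count (fun v => v < y) s <= t -> y <= nth 0 s t.
Proof.
move=> Hs Ht Hc; rewrite leqNgt; apply/negP => Hy.
have : count (fun v => v < y) (take t.+1 s) = t.+1.
  rewrite -[RHS](size_takel (s:=s)) //; apply/eqP; rewrite -all_count.
  apply/(all_nthP 0) => i; rewrite size_takel // => Hi; rewrite nth_take //.
  apply: leq_ltn_trans Hy; apply: (sorted_leq_nth leq_trans leqnn) => //; rewrite ?inE /=; lia.
move=> Hd; move: Hc; rewrite -[in count _ s](cat_take_drop t.+1 s) count_cat Hd; lia.
Qed.

Lemma lex_fail (c q : seq nat) m : m < size c -> m < size q ->
  (forall t, t < m -> nth 0 q t <= nth 0 c t) -> nth 0 q m < nth 0 c m -> ~~ lexle c q.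
Proof.
elim: m c q => [|m IH] [|x c] [|y q] //= Hc Hq H Hm.
- by rewrite ltnNge (ltnW Hm) /= gtn_eqF.
- have Hyx := H 0 erefl; rewrite /= in Hyx.
  rewrite ltnNge Hyx /=; case: eqP => //= _.
  apply: IH => // t Ht; exact: (H t.+1).
Qed.

Lemma count_ord k t : t <= k -> count (fun j : 'I_k => j < t) (enum 'I_k) = t.
Proof.
move=> Htk.
have -> : count (fun j : 'I_k => j < t) (enum 'I_k) = count (fun n => n < t) (map val (enum 'I_k)).
  by rewrite count_map.
rewrite val_enum_ord -(subnKC Htk) iotaD count_cat add0n.
rewrite (eq_in_count (a2 := predT)); last by move=> x; rewrite mem_iota.
rewrite (eq_in_count (s := iota t _) (a2 := pred0)); last by move=> x; rewrite mem_iota /=; lia.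
by rewrite count_predT count_pred0 size_iota addn0.
Qed.

Lemma count_nu n k (P : 'M[bool]_(n, k)) (a : pred nat) :
  count a (nu P) = count (fun j => a (colnum P j)) (enum 'I_k).
Proof.
rewrite /nu; have /seq.permP -> := permEl (perm_sort leq [seq colnum P j | j <- enum 'I_k]).
by rewrite count_map.
Qed.

Lemma size_nu n k (P : 'M[bool]_(n, k)) : size (nu P) = k.
Proof. by rewrite /nu size_sort size_map size_enum_ord. Qed.

Lemma sorted_nu n k (P : 'M[bool]_(n, k)) : sorted leq (nu P).
Proof. apply: sort_sorted; exact: leq_total. Qed.

Theorem lemma4p13 (n k : nat) (P : 'M[bool]_(n, k)) :
  minimal_rep P ->
  forall i i' : 'I_n, (i <= i')%N -> (rownum P i' <= rownum P i)%N.
Proof.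
move=> [_ [Hinc Hmin]] i i' Hii'; rewrite leqNgt; apply/negP => Hlt.
have [j0 [Heq [Hi Hi']]] := W_cmp (a := fun j => P i j) (b := fun j => P i' j) Hlt.
have Hne : i != i' by apply/eqP => E; move: Hlt; rewrite E ltnn.
have Hlt' : i < i' by rewrite ltn_neqAle Hne Hii'.
set Q := flip_perm P (fun _ => false) (tperm i i').
have HQ : forall j, colnum Q j + (P i j : nat) * 2 ^ i + (P i' j : nat) * 2 ^ i' =
                    colnum P j + (P i' j : nat) * 2 ^ i + (P i j : nat) * 2 ^ i'.
  have Hne' : i' != i by rewrite eq_sym.
  have split2 : forall F : 'I_n -> nat, \sum_(r < n) F r = F i + F i' + \sum_(r < n | (r != i) && (r != i')) F r.
    move=> F; rewrite (bigD1 i) //= (bigD1 i') /= ?Hne' // addnA.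
    by congr (_ + _); apply: eq_bigl => r; rewrite andbC.
  move=> j; rewrite /colnum !split2 !mxE tpermL tpermR !addbF.
  have -> : \sum_(r < n | (r != i) && (r != i')) (Q r j : nat) * 2 ^ r =
            \sum_(r < n | (r != i) && (r != i')) (P r j : nat) * 2 ^ r.
    apply: eq_bigr => r /andP [H1 H2]; rewrite mxE tpermD 1?eq_sym // addbF //.
  lia.
have Hmono : forall j j' : 'I_k, j <= j' -> colnum P j <= colnum P j'.
  move=> j j'; rewrite leq_eqVlt => /orP [/eqP E|E]; last exact/ltnW/Hinc.
  by rewrite (_ : j = j') //; apply: val_inj.
have Hsame : forall j : 'I_k, j < j0 -> colnum Q j = colnum P j.
  move=> j Hj; have := HQ j; rewrite (Heq j Hj); lia.
have Hless : colnum Q j0 < colnum P j0.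
  have := HQ j0; rewrite Hi Hi' /=.
  have : 2 ^ i < 2 ^ i' by rewrite ltn_exp2l.
  lia.
have := Hmin (fun _ => false) (tperm i i'); apply/negP.
have Hk : j0 < k := ltn_ord j0.
apply: (lex_fail (m := j0)); rewrite ?size_nu //.
- move=> t Ht; apply: (@leq_trans (colnum P (Ordinal (ltn_trans Ht Hk)))).
  + rewrite -ltnS; apply: sortedA; rewrite ?size_nu ?sorted_nu //; first lia.
    rewrite count_nu; apply: (@leq_trans (count (fun j : 'I_k => j < t.+1) (enum 'I_k))).
      rewrite count_ord //; lia.
    apply: sub_count => j /= Hj; rewrite ltnS Hsame; last lia.
    by apply: Hmono.
  + apply: sortedB; rewrite ?size_nu ?sorted_nu //; first lia.
    rewrite count_nu -[X in _ <= X](@count_ord k t); last lia.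
    apply: sub_count => j /=; rewrite ltnNge => H; rewrite ltnNge; apply: contra H => Hj.
    by apply: Hmono.
- apply: (@leq_trans (colnum P j0)).
  + apply: sortedA; rewrite ?size_nu ?sorted_nu //.
    rewrite count_nu; apply: (@leq_trans (count (fun j : 'I_k => j < j0.+1) (enum 'I_k))).
      by rewrite count_ord.
    apply: sub_count => j /= Hj; rewrite ltnS leq_eqVlt in Hj; case/orP: Hj => Hj.
    * by rewrite (_ : j = j0) //; apply: val_inj; apply/eqP.
    * rewrite Hsame //; exact: Hinc.
  + apply: sortedB; rewrite ?size_nu ?sorted_nu //.
    rewrite count_nu -[X in _ <= X](@count_ord k j0); last lia.
    apply: sub_count => j /=; rewrite ltnNge => H; rewrite ltnNge; apply: contra H => Hj.
    by apply: Hmono.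
Qed.
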